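(* Let $B$ and $C$ be sets and let $s,t:B\to C$ be bijections such that $s(a)\neq t(a)$ for all $a\in B$. Then there is a decomposition of $B$ into three pairwise disjoint subsets $B=B_0\sqcup B_1\sqcup B_2$ such that $s(B_i)\cap t(B_i)=\varnothing$ for each $i\in\{0,1,2\}$. *)

(* Defs.v *)
From mathcomp Require Import ssreflect ssrfun ssrbool.

(* Main.v *)
Require Import Defs.
From mathcomp Require Import ssreflect ssrfun ssrbool.
From mathcomp Require Import eqtype ssrnat.
From Stdlib Require Import Classical ClassicalEpsilon FunctionalExtensionality PropExtensionality ProofIrrelevance.

Lemma exmin {P : nat -> Prop} {n} : P n -> exists m, P m /\ forall k, k < m -> ~ P k.
Proof.
elim/ltn_ind: n => n IH Pn.
case: (classic (exists k, k < n /\ P k)) => [[k [kn Pk]]|H].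
  exact: IH k kn Pk.
exists n; split=>// k kn Pk; apply H; eauto.
Qed.

Section Col.
Variables (B : Type) (f g : B -> B).
Hypotheses (fK : cancel f g) (gK : cancel g f) (hf : forall x, f x <> x).

Lemma iterK n x : iter n g (iter n f x) = x.
Proof. elim: n x => [|n IH] x //. by rewrite iterS iterSr IH fK. Qed.

Definition R a b := exists n m, iter n f a = iter m f b.

Definition r a := epsilon (inhabits a) (R a).

Lemma R_trans {a b c} : R a b -> R b c -> R a c.
Proof.
move=> [n [m H1]] [p [q H2]]; exists (p + n), (m + q).
by rewrite !iterD H1 -!iterD addnC iterD H2 -iterD.
Qed.

Lemma R_sym {a b} : R a b -> R b a.
Proof. by move=> [n [m H]]; exists m, n. Qed.

Lemma rf x : r (f x) = r x.
Proof.
have E : R x = R (f x).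
  apply: functional_extensionality => z; apply: propositional_extensionality.
  have h : R x (f x) by exists 1, 0.
  split=> hz; first [exact: R_trans h hz | exact: R_trans (R_sym h) hz].
rewrite /r; move: (inhabits (f x)); rewrite -E => i.
by rewrite (proof_irrelevance _ i (inhabits x)).
Qed.

Definition Fw x n := iter n f (r x) = x.
Definition Bw x m := iter m g (r x) = x.
Definition Fwmin x n := Fw x n /\ forall k, k < n -> ~ Fw x k.
Definition Bwmin x n := Bw x n /\ forall k, k < n -> ~ Bw x k.

Lemma orbit x : (exists n, Fw x n) \/ (exists m, Bw x m).
Proof.
have Hr : R x (r x) := epsilon_spec (inhabits x) (R x) (ex_intro _ x (ex_intro _ 0 (ex_intro _ 0 erefl))). 
have Hs : R (r x) x := R_sym Hr. case: Hs => n [m H].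
case: (leqP m n) => mn.
  left; exists (n - m); rewrite /Fw.
  have E1 : iter m g (iter n f (r x)) = x by rewrite H iterK.
  have E2 : iter n f (r x) = iter m f (iter (n - m) f (r x)) by rewrite -iterD subnKC.
  by rewrite E2 iterK in E1.
right; exists (m - n); rewrite /Bw.
have E2 : iter m f x = iter n f (iter (m - n) f x) by rewrite -iterD subnKC // ltnW.
have E1 : r x = iter (m - n) f x by rewrite -(iterK n (r x)) H E2 iterK.
by rewrite E1 iterK.
Qed.

Lemma min_uniq {P : nat -> Prop} {n n'} :
  P n -> (forall k, k < n -> ~ P k) -> P n' -> (forall k, k < n' -> ~ P k) -> n = n'.
Proof.
move=> Pn Hn Pn' Hn'; case: (ltngtP n n') => // h.
- by case: (Hn' _ h).
- by case: (Hn _ h).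
Qed.

Definition c x : nat :=
  if excluded_middle_informative (exists n, Fw x n) then
    let n := epsilon (inhabits 0) (Fwmin x) in
    if excluded_middle_informative (f x = r x /\ ~~ odd n) then 2 else odd n
  else odd (epsilon (inhabits 0) (Bwmin x)).

Lemma cF {x n} : Fwmin x n ->
  c x = if excluded_middle_informative (f x = r x /\ ~~ odd n) then 2 else odd n.
Proof.
move=> H; rewrite /c; destruct (excluded_middle_informative (exists n, Fw x n)) as [HF|NF]; last by exfalso; apply: NF; exists n; case: H.
have E : epsilon (inhabits 0) (Fwmin x) = n.
  have : Fwmin x (epsilon (inhabits 0) (Fwmin x)) by apply: epsilon_spec; exists n.
  case=> [H1 H2]; case: H => [H3 H4]; exact: min_uniq H1 H2 H3 H4.
by rewrite E.
Qed.

Lemma cB {x m} : ~ (exists n, Fw x n) -> Bwmin x m -> c x = odd m.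
Proof.
move=> NF H; rewrite /c; destruct (excluded_middle_informative (exists n, Fw x n)) as [HF|NF2]; first by [].
have : Bwmin x (epsilon (inhabits 0) (Bwmin x)) by apply: epsilon_spec; exists m.
case=> [H1 H2]; case: H => [H3 H4]; by rewrite (min_uniq H1 H2 H3 H4).
Qed.

Lemma cF2 {x n} : Fwmin x n -> f x = r x -> ~~ odd n -> c x = 2.
Proof.
move=> H h1 h2; rewrite (cF H).
by destruct (excluded_middle_informative (f x = r x /\ ~~ odd n)) as [h|h]; last by case: h.
Qed.

Lemma cF1 {x n} : Fwmin x n -> ~ (f x = r x /\ ~~ odd n) -> c x = odd n.
Proof.
move=> H h1; rewrite (cF H).
by destruct (excluded_middle_informative (f x = r x /\ ~~ odd n)) as [h|h]; first by case: h1.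
Qed.

Lemma cR y : r y = y -> c y = 0.
Proof.
move=> ry; have H : Fwmin y 0 by split=> // k.
rewrite (cF1 H) // => [[h _]].
by case: (hf y); rewrite h.
Qed.

Lemma c3 x : c x = 0 \/ c x = 1 \/ c x = 2.
Proof.
rewrite /c; destruct (excluded_middle_informative (exists n, Fw x n)) as [h1|h1].
  destruct (excluded_middle_informative _) as [h2|h2]; first by auto.
  by simpl; case: (odd _); [right; left|left].
by simpl; case: (odd _); [right; left|left].
Qed.

Lemma cfx x : c (f x) <> c x.
Proof.
case: (classic (exists n, Fw x n)) => [[n0 Fn0]|NF].
  have [n [Fn Hn]] := exmin Fn0.
  case: (classic (f x = r x)) => fr.
    rewrite cR; last by rewrite rf.
    case: (classic (odd n)) => o.
      rewrite (cF1 (conj Fn Hn)); first by rewrite o.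
      by case=> _; rewrite o.
    by rewrite (cF2 (conj Fn Hn)) //; apply/negP.
  have H' : Fwmin (f x) n.+1.
    split; first by rewrite /Fw rf iterS Fn.
    move=> [|k] kn; rewrite /Fw rf //=.
      by move=> h; apply: fr; rewrite -h.
    move=> h; apply: (Hn k kn); rewrite /Fw.
    by rewrite -(fK (iter k f (r x))) h fK.
  rewrite (cF1 (conj Fn Hn)); last by case.
  case: (classic (f (f x) = r (f x) /\ ~~ odd n.+1)) => h.
    rewrite (cF2 H'); [by case: (odd n) | by case: h | by case: h].
  rewrite (cF1 H') //= ; by case: (odd n).
case: (orbit x) => [//|[m0 Bm0]].
have [m [Bm Hm]] := exmin Bm0.
case: m Bm Hm => [|m] Bm Hm; first by case: NF; exists 0.
have ye : f x = iter m g (r x) by rewrite -[in LHS]Bm iterS gK.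
case: m Bm Hm ye => [|m] Bm Hm ye.
  rewrite cR; last by rewrite rf ye.
  by rewrite (cB NF (conj Bm Hm)).
have NF' : ~ (exists n, Fw (f x) n).
  move=> [[|k]]; rewrite /Fw rf /=.
    move=> h; apply: (Hm 1) => //; rewrite /Bw /= h fK //.
  move=> h; apply: NF; exists k; by rewrite /Fw -(fK (iter k f (r x))) h fK.
have H' : Bwmin (f x) m.+1.
  split; first by rewrite /Bw rf -ye.
  move=> j jm; rewrite /Bw rf => h; apply: (Hm j.+1) => //.
  by rewrite /Bw iterS h fK.
rewrite (cB NF' H') (cB NF (conj Bm Hm)) /=.
by case: odd.
Qed.

End Col.

Theorem lemma3p5 (B C : Type) (s t : B -> C)
  (hs : bijective s) (ht : bijective t) (hst : forall a : B, s a <> t a) :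
  exists B0 B1 B2 : B -> Prop,
    (forall a, B0 a \/ B1 a \/ B2 a) /\
    (forall a, ~ (B0 a /\ B1 a)) /\
    (forall a, ~ (B0 a /\ B2 a)) /\
    (forall a, ~ (B1 a /\ B2 a)) /\
    (forall a a', B0 a -> B0 a' -> s a <> t a') /\
    (forall a a', B1 a -> B1 a' -> s a <> t a') /\
    (forall a a', B2 a -> B2 a' -> s a <> t a').
Proof.
case: hs => si sK siK; case: ht => ti tK tiK.
pose f a := si (t a); pose g a := ti (s a).
have fK : cancel f g by move=> a; rewrite /f /g siK tK.
have gK : cancel g f by move=> a; rewrite /f /g tiK sK.
have hf : forall x, f x <> x by move=> x h; apply: (hst x); rewrite -{1}h /f siK.
pose cc := @c B f g.
have key : forall a a', cc a = cc a' -> s a <> t a'.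
  move=> a a' E h; apply: (@cfx B f g fK gK hf a').
  rewrite -/cc -E; congr cc; by rewrite /f -h sK.
exists (fun a => cc a = 0), (fun a => cc a = 1), (fun a => cc a = 2).
split; first by move=> a; exact: (@c3 B f g a).
split; first by move=> a [-> ].
split; first by move=> a [-> ].
split; first by move=> a [-> ].
split; first by move=> a a' h1 h2; apply: key; rewrite h1 h2.
split; by move=> a a' h1 h2; apply: key; rewrite h1 h2.
Qed.
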